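(* For each $n$ let $0<p_n,q_n\le 1$ with $\frac{p_nq_n^2n}{\log n}\to\infty$ as $n\to\infty$, and let $\alpha^{(0)}$ be an initial configuration of $n$ cards. Let $\alpha^{(k)}$ be the configuration after $k$ moves of $\mathscr{B}(n,p_n,q_n)$, and let $N(\alpha^{(k)})$ denote its number of nonempty piles. Put $D=\lceil 14\log n/(p_nq_n)\rceil$ and $M=\lceil n^2/p_n\rceil$. Then \[ \frac{1}{q_nn}\max\{N(\alpha^{(D+1)}),\dotsc,N(\alpha^{(D+M)})\}\to 0\quad\text{in probability as } n\to\infty. \]
   Context: $\mathscr{B}(n,p,q)$ ($0<p,q\le 1$) is $p$-random $q$-proportion Bulgarian solitaire on $n$ identical cards distributed in piles. In one move, from each pile of size $h$ the top $\lceil qh\rceil$ cards are candidates; each candidate card is picked with probability $p$, independently of all other candidates; the picked cards are removed and together form one new pile. *)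

(* Defs.v *)
From HB Require Import structures.
From mathcomp Require Import all_boot all_order all_algebra.
From mathcomp Require Import all_classical all_reals all_analysis.
Set Implicit Arguments. Unset Strict Implicit. Unset Printing Implicit Defensive.
Import Order.TTheory GRing.Theory Num.Theory.
Local Open Scope ring_scope.

(* p-random q-proportion Bulgarian solitaire B(n,p,q).
   A configuration is a list of pile sizes (order irrelevant; cards identical). *)
Section Bulgarian.
Variable R : realType.

Definition cand (q : R) (h : nat) : nat := `|Num.ceil (q * h%:R)|%N.

(* all vectors xs with xs_i <= cs_i (number of picked cards from each pile) *)
Fixpoint outcomes (cs : seq nat) : seq (seq nat) :=
  match cs with
  | [::] => [:: [::]]
  | c :: cs' => [seq x :: xs | x <- iota 0 c.+1, xs <- outcomes cs']
  end.

Definition binw (p : R) (c x : nat) : R := 'C(c, x)%:R * p ^+ x * (1 - p) ^+ (c - x)%N.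

Definition weight (p : R) (cs xs : seq nat) : R :=
  \prod_(cx <- zip cs xs) binw p cx.1 cx.2.

Definition next_conf (s xs : seq nat) : seq nat :=
  [seq h <- [seq (a.1 - a.2)%N | a <- zip s xs] | (0 < h)%N]
  ++ (if (0 < sumn xs)%N then [:: sumn xs] else [::]).

Definition step (p q : R) (s : seq nat) : seq (R * seq nat) :=
  [seq (weight p (map (cand q) s) xs, next_conf s xs) | xs <- outcomes (map (cand q) s)].

(* traj_prob p q k s E = probability that the trajectory [:: alpha^(1); ...; alpha^(k)]
   of k moves started at alpha^(0) = s satisfies E *)
Fixpoint traj_prob (p q : R) (k : nat) (s : seq nat) (E : seq (seq nat) -> bool) : R :=
  match k with
  | 0 => (E [::])%:R
  | k'.+1 => \sum_(ws <- step p q s)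
               ws.1 * traj_prob p q k' ws.2 (fun tr => E (ws.2 :: tr))
  end.

End Bulgarian.

Definition npiles (s : seq nat) : nat := count (fun h => 0 < h)%N s.

Definition is_config (n : nat) (s : seq nat) : Prop :=
  sumn s = n /\ all (fun h => 0 < h)%N s.

(* Main.v *)
Require Import Defs.
From HB Require Import structures.
From mathcomp Require Import all_boot all_order all_algebra.
From mathcomp Require Import all_classical all_reals all_analysis.
From mathcomp Require Import zify ring lra.
Import Order.TTheory GRing.Theory Num.Theory.
Import numFieldNormedType.Exports.
Local Open Scope classical_set_scope.
Local Open Scope ring_scope.

Section Comb.
Variable R : realType.
Variables p q : R.
Hypothesis hp0 : 0 < p.
Hypothesis hp1 : p <= 1.
Hypothesis hq0 : 0 < q.
Hypothesis hq1 : q <= 1.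

Lemma cand_le h : (cand q h <= h)%N.
Proof.
rewrite /cand.
have h1 : Num.ceil (q * h%:R) <= h%:Z.
  rewrite ceil_le_int. rewrite -[X in _ <= X]mul1r. 
  by rewrite ler_wpM2r // ler0n.
have h2 : 0 <= Num.ceil (q * h%:R).
  rewrite ceil_ge0. apply: (@lt_le_trans _ _ 0); first by [].
  by rewrite mulr_ge0 // ltW.
lia.
Qed.

Lemma cand_ge h : q * h%:R <= (cand q h)%:R.
Proof.
rewrite /cand.
have h2 : 0 <= Num.ceil (q * h%:R).
  rewrite ceil_ge0. apply: (@lt_le_trans _ _ 0); first by [].
  by rewrite mulr_ge0 // ltW.
rewrite natr_absz ger0_norm //. exact: ceil_ge.
Qed.

Lemma binw_ge0 c x : 0 <= binw p c x.
Proof.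
rewrite /binw. apply: mulr_ge0; [apply: mulr_ge0|]; rewrite ?ler0n //; apply: exprn_ge0; [exact: ltW| by rewrite subr_ge0].
Qed.

Lemma weight_ge0 cs xs : 0 <= weight p cs xs.
Proof. rewrite /weight. apply: prodr_ge0 => i _. exact: binw_ge0. Qed.

Lemma weight_cons c cs x xs : weight p (c :: cs) (x :: xs) = binw p c x * weight p cs xs.
Proof. by rewrite /weight /= big_cons. Qed.

Lemma sum_binw c : \sum_(x <- iota 0 c.+1) binw p c x = 1.
Proof.
have E := exprDn (1 - p) p c. rewrite subrK expr1n in E.
apply: (eq_trans _ (esym E)).
rewrite -(big_mkord xpredT (fun i => (1 - p) ^+ (c - i) * p ^+ i *+ 'C(c, i))%R).
rewrite /index_iota subn0. apply: eq_bigr => i _.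
rewrite /binw -mulr_natl; ring.
Qed.

Lemma mean_binw c : \sum_(x <- iota 0 c.+1) binw p c x * x%:R = p * c%:R.
Proof.
case: c => [|c]; first by rewrite /= big_cons big_nil !mulr0 addr0.
rewrite (_ : iota 0 c.+2 = 0%N :: map (addn 1) (iota 0 c.+1)); last first.
  by rewrite -iotaDl.
rewrite big_cons mulr0 add0r big_map.
rewrite (eq_bigr (fun i => (p * c.+1%:R) * binw p c i)); last first.
  move=> i _. rewrite /binw add1n subSS.
  have H : ('C(c.+1,i.+1)%:R * i.+1%:R : R) = c.+1%:R * 'C(c,i)%:R.
    by rewrite -!natrM mulnC -mul_bin_diag.
  have -> : 'C(c.+1, i.+1)%:R * p ^+ i.+1 * (1 - p) ^+ (c - i) * i.+1%:R =
    ('C(c.+1,i.+1)%:R * i.+1%:R) * (p * p ^+ i * (1 - p) ^+ (c - i)) :> R.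
    by rewrite exprS; ring.
  rewrite H; ring.
by rewrite -big_distrr sum_binw /= mulr1.
Qed.

Lemma mass cs : \sum_(xs <- outcomes cs) weight p cs xs = 1.
Proof.
elim: cs => [|c cs IH]; first by rewrite /= big_cons big_nil /weight big_nil addr0.
rewrite (_ : outcomes (c :: cs) = [seq x :: xs | x <- iota 0 c.+1, xs <- outcomes cs]) // big_allpairs_dep.
rewrite (eq_bigr (fun x => binw p c x)) ?sum_binw // => x _.
rewrite (eq_bigr (fun xs => binw p c x * weight p cs xs)); last first.
  by move=> xs _; rewrite weight_cons.
by rewrite -big_distrr IH /= mulr1.
Qed.

Lemma outcomes_le s xs : xs \in outcomes (map (cand q) s) -> all2 (fun x h => x <= h)%N xs s.
Proof.
elim: s xs => [|h s IH] xs; first by rewrite inE => /eqP ->.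
rewrite (_ : outcomes (map (cand q) (h :: s)) = [seq x :: xs | x <- iota 0 (cand q h).+1, xs <- outcomes (map (cand q) s)]) //.
move/allpairsPdep => [x [ys [Hx Hys ->]]] /=.
rewrite IH // andbT. rewrite mem_iota /= add0n ltnS in Hx.
exact: leq_trans Hx (cand_le h).
Qed.

Definition sub (s xs : seq nat) := [seq (a.1 - a.2)%N | a <- zip s xs].

Lemma all2_size (s xs : seq nat) : all2 (fun x h => x <= h)%N xs s -> size xs = size s.
Proof. by elim: s xs => [|h s IH] [|x xs] //= /andP [_ /IH ->]. Qed.

Lemma sub_sum s xs : all2 (fun x h => x <= h)%N xs s -> (sumn (sub s xs) + sumn xs)%N = sumn s.
Proof.
elim: s xs => [|h s IH] [|x xs] //= /andP [Hx /IH Hs].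
rewrite /sub /= in Hs *. lia.
Qed.

Lemma sumn_filter_pos (u : seq nat) : sumn [seq h <- u | (0 < h)%N] = sumn u.
Proof. elim: u => [|h u IH] //=; case: h => [|h] //=; by rewrite IH. Qed.

Lemma sumn_next s xs : all2 (fun x h => x <= h)%N xs s -> sumn (next_conf s xs) = sumn s.
Proof.
move=> H; rewrite /next_conf sumn_cat sumn_filter_pos -(sub_sum _ _ H) /sub.
case: ifP => /= hx; lia.
Qed.

Lemma size_sub s xs : all2 (fun x h => x <= h)%N xs s -> size (sub s xs) = size s.
Proof. move=> H; by rewrite /sub size_map size_zip (all2_size _ _ H) minnn. Qed.

Fixpoint Ex (k : nat) (s : seq nat) (f : seq nat -> R) : R :=
  if k is k'.+1 then \sum_(ws <- step p q s) ws.1 * Ex k' ws.2 f else f s.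

Lemma Ex_step k s f : Ex k.+1 s f =
  \sum_(xs <- outcomes (map (cand q) s)) weight p (map (cand q) s) xs * Ex k (next_conf s xs) f.
Proof. by rewrite /= /step big_map. Qed.

Lemma Ex_bound k s f B : (forall s', sumn s' = sumn s -> f s' <= B) -> Ex k s f <= B.
Proof.
elim: k s => [|k IH] s Hf; first exact: Hf.
rewrite Ex_step.
apply: (@le_trans _ _ (\sum_(xs <- outcomes (map (cand q) s)) weight p (map (cand q) s) xs * B)).
  rewrite big_seq [X in _ <= X]big_seq; apply: ler_sum => xs Hxs.
  apply: ler_wpM2l; first exact: weight_ge0.
  apply: IH => s' Hs'; apply: Hf. by rewrite Hs' sumn_next // outcomes_le.
by rewrite -big_distrl mass /= mul1r.
Qed.

Lemma Ex_mono k s f g : (forall s', f s' <= g s') -> Ex k s f <= Ex k s g.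
Proof.
elim: k s => [|k IH] s Hf; first exact: Hf.
rewrite !Ex_step; apply: ler_sum => xs _.
apply: ler_wpM2l; first exact: weight_ge0. exact: IH.
Qed.

Lemma Ex_ext k s f g : (forall s', f s' = g s') -> Ex k s f = Ex k s g.
Proof.
elim: k s => [|k IH] s Hf; first exact: Hf.
rewrite !Ex_step; apply: eq_bigr => xs _. by rewrite IH.
Qed.

Lemma Ex_comp a b s f : Ex (a + b) s f = Ex a s (fun s' => Ex b s' f).
Proof.
elim: a s => [|a IH] s; first by rewrite add0n.
rewrite addSn !Ex_step; apply: eq_bigr => xs _. by rewrite IH.
Qed.

Lemma traj_ext K s E1 E2 : (forall tr, E1 tr = E2 tr) -> traj_prob p q K s E1 = traj_prob p q K s E2.
Proof.
elim: K s E1 E2 => [|K IH] s E1 E2 H /=; first by rewrite H.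
apply: eq_bigr => ws _; congr (_ * _); apply: IH => tr; exact: H.
Qed.

Lemma step_ge0 s ws : ws \in step p q s -> 0 <= ws.1.
Proof. by rewrite /step => /mapP [xs _ ->] /=; apply: weight_ge0. Qed.

Lemma step_mass s : \sum_(ws <- step p q s) ws.1 = 1.
Proof. by rewrite /step big_map mass. Qed.

Lemma traj_const K s (b : bool) : traj_prob p q K s (fun _ => b) = b%:R.
Proof.
elim: K s => [|K IH] s //=.
rewrite (eq_bigr (fun ws => ws.1 * b%:R)); last by move=> ws _; rewrite IH.
by rewrite -big_distrl step_mass /= mul1r.
Qed.

Lemma traj_mono K s (E1 E2 : seq (seq nat) -> bool) : (forall tr, E1 tr -> E2 tr) ->
  traj_prob p q K s E1 <= traj_prob p q K s E2.
Proof.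
elim: K s E1 E2 => [|K IH] s E1 E2 H /=.
  by case: (boolP (E1 [::])) => h; [rewrite (H _ h) | rewrite ler0n].
rewrite big_seq [X in _ <= X]big_seq; apply: ler_sum => ws Hws.
apply: ler_wpM2l; first exact: step_ge0 Hws.
apply: IH => tr; exact: H.
Qed.

Lemma traj_or K s (E1 E2 : seq (seq nat) -> bool) :
  traj_prob p q K s (fun tr => E1 tr || E2 tr) <= traj_prob p q K s E1 + traj_prob p q K s E2.
Proof.
elim: K s E1 E2 => [|K IH] s E1 E2 /=.
  by case: (E1 [::]); case: (E2 [::]); rewrite /= ?addr0 ?add0r ?lerDl ?ler0n.
rewrite -big_split /= big_seq [X in _ <= X]big_seq; apply: ler_sum => ws Hws.
rewrite -mulrDr; apply: ler_wpM2l; first exact: step_ge0 Hws.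
exact: IH.
Qed.

Lemma traj_has K s (P : nat -> seq (seq nat) -> bool) ks :
  traj_prob p q K s (fun tr => has (fun k => P k tr) ks) <= \sum_(k <- ks) traj_prob p q K s (P k).
Proof.
elim: ks => [|k ks IH].
  by rewrite big_nil /= traj_const.
rewrite big_cons.
apply: le_trans (traj_or _ _ (P k) (fun tr => has (fun k => P k tr) ks)) _.
by rewrite lerD2l.
Qed.

Lemma traj_nth K s k (P : seq nat -> bool) : (0 < k <= K)%N ->
  traj_prob p q K s (fun tr => P (nth [::] tr k.-1)) = Ex k s (fun s' => (P s')%:R).
Proof.
elim: K s k => [|K IH] s k /andP [hk hkK]; first by case: k hk hkK.
case: k hk hkK => [|k] // _ hkK.
rewrite Ex_step /= /step big_map; apply: eq_bigr => xs _; congr (_ * _).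
case: k hkK => [|k] hkK; first by rewrite /= traj_const.
by rewrite -(IH _ k.+1).
Qed.

Lemma exp_old s m :
  \sum_(xs <- outcomes (map (cand q) s)) weight p (map (cand q) s) xs * (sumn (take m (sub s xs)))%:R
  <= (1 - p * q) * (sumn (take m s))%:R.
Proof.
elim: s m => [|h s IH] m.
  by rewrite /= big_cons big_nil /= !mulr0 addr0.
case: m => [|m].
  rewrite big1 /= ?mulr0 // => xs _. by rewrite take0 mulr0.
rewrite (_ : outcomes (map (cand q) (h :: s)) = [seq x :: xs | x <- iota 0 (cand q h).+1, xs <- outcomes (map (cand q) s)]) //.
rewrite big_allpairs_dep.
set c := cand q h.
set O0 := (sumn (take m s))%:R : R.
apply: (@le_trans _ _ (\sum_(x <- iota 0 c.+1) (binw p c x * (h%:R - x%:R) + binw p c x * ((1 - p * q) * O0)))).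
  rewrite big_seq [X in _ <= X]big_seq; apply: ler_sum => x Hx.
  have hxc : (x <= h)%N.
    rewrite mem_iota add0n ltnS in Hx. exact: leq_trans Hx (cand_le h).
  rewrite (eq_bigr (fun xs => binw p c x * (weight p (map (cand q) s) xs * (h - x)%:R) +
           binw p c x * (weight p (map (cand q) s) xs * (sumn (take m (sub s xs)))%:R))); last first.
    move=> xs _. rewrite weight_cons /sub /= natrD. ring.
  rewrite big_split /= -!big_distrr /= -big_distrl /= mass /= mul1r natrB //.
  rewrite lerD2l. apply: ler_wpM2l; first exact: binw_ge0. exact: IH.
rewrite big_split /= -big_distrl /= sum_binw /= mul1r.
rewrite (eq_bigr (fun x => h%:R * binw p c x - binw p c x * x%:R)); last by move=> x _; ring.
rewrite sumrB -big_distrr /= sum_binw mean_binw /= mulr1.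
rewrite /= natrD.
have hc := cand_ge h.
have : p * (q * h%:R) <= p * c%:R by apply: ler_wpM2l; [exact: ltW|].
move=> H. rewrite mulrDr. rewrite lerD2r.
apply: (@le_trans _ _ (h%:R - p * (q * h%:R))); first by rewrite lerD2l lerN2.
rewrite mulrBl mul1r mulrA. done.
Qed.

Lemma npiles_split s m : (npiles s <= npiles (take m s) + (size s - m))%N.
Proof.
rewrite /npiles -{1}(cat_take_drop m s) count_cat leq_add2l.
by rewrite -size_drop count_size.
Qed.

Lemma count_pos_sumn (u : seq nat) : (0 < count (fun h => 0 < h)%N u)%N -> (0 < sumn u)%N.
Proof. elim: u => [|h u IH] //=; case: h => [|h] //=; rewrite add0n; exact: IH. Qed.

Lemma pq_ge0 : 0 <= 1 - p * q.
Proof. rewrite subr_ge0 mulr_ile1 // ltW //. Qed.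

Lemma key t s m j : (t + (size s - m) <= j)%N ->
  Ex t s (fun s' => (j < npiles s')%N%:R) <= (1 - p * q) ^+ t * (sumn (take m s))%:R.
Proof.
elim: t s m j => [|t IH] s m j Hj.
  rewrite /= expr0 mul1r. case: (ltnP j (npiles s)) => H /=; last by rewrite ler0n.
  rewrite ler1n. apply: count_pos_sumn.
  have := npiles_split s m. rewrite /npiles in H *. lia.
rewrite Ex_step.
apply: (@le_trans _ _ (\sum_(xs <- outcomes (map (cand q) s)) weight p (map (cand q) s) xs *
   ((1 - p * q) ^+ t * (sumn (take m (sub s xs)))%:R))).
  rewrite big_seq [X in _ <= X]big_seq; apply: ler_sum => xs Hxs.
  apply: ler_wpM2l; first exact: weight_ge0.
  have Hle := outcomes_le _ _ Hxs.
  set u := sub s xs.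
  set m' := count (fun h => 0 < h)%N (take m u).
  have Hu : size u = size s by rewrite /u size_sub.
  have Hf : [seq h <- u | (0 < h)%N] = [seq h <- take m u | (0 < h)%N] ++ [seq h <- drop m u | (0 < h)%N].
    by rewrite -filter_cat cat_take_drop.
  have Hsz : size [seq h <- take m u | (0 < h)%N] = m' by rewrite size_filter.
  have -> : sumn (take m u) = sumn (take m' (next_conf s xs)).
    rewrite /next_conf -/(sub s xs) -/u Hf -catA take_size_cat //.
    by rewrite sumn_filter_pos.
  apply: IH.
  have H1 : (size (next_conf s xs) <= count (fun h => 0 < h)%N u + 1)%N.
    rewrite /next_conf -/(sub s xs) -/u size_cat size_filter leq_add2l.
    by case: ifP.
  have H2 : (count (fun h => 0 < h)%N u <= m' + (size s - m))%N.
    rewrite -{1}(cat_take_drop m u) count_cat leq_add2l -Hu -size_drop. exact: count_size.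
  lia.
rewrite (eq_bigr (fun xs => (1 - p * q) ^+ t * (weight p (map (cand q) s) xs * (sumn (take m (sub s xs)))%:R))); last by move=> xs _; ring.
rewrite -big_distrr /= exprS [(1 - p * q) * _]mulrC -mulrA.
apply: ler_wpM2l; first exact: exprn_ge0 pq_ge0.
exact: exp_old.
Qed.

Lemma bound_all n0 s D M : sumn s = n0 ->
  traj_prob p q (D + M) s (fun tr => has (fun k => (D < npiles (nth [::] tr k.-1))%N) (iota D.+1 M))
  <= M%:R * ((1 - p * q) ^+ D * n0%:R).
Proof.
move=> Hs.
apply: le_trans (traj_has _ _ (fun k tr => (D < npiles (nth [::] tr k.-1))%N) _) _.
apply: (@le_trans _ _ (\sum_(k <- iota D.+1 M) ((1 - p * q) ^+ D * n0%:R))).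
  rewrite big_seq [X in _ <= X]big_seq; apply: ler_sum => k Hk.
  rewrite mem_iota in Hk. case/andP: Hk => Hk1 Hk2.
  rewrite (traj_nth (D + M) s k (fun s2 => (D < npiles s2)%N)); last by apply/andP; split; lia.
  rewrite (_ : k = (k - D) + D)%N; last by lia.
  rewrite Ex_comp. apply: Ex_bound => s' Hs'.
  apply: le_trans (key D s' (size s') D _) _; first by rewrite subnn addn0.
  by rewrite take_size Hs' Hs.
rewrite (_ : iota D.+1 M = index_iota D.+1 (D.+1 + M)); last by rewrite /index_iota addKn.
by rewrite sumr_const_nat addKn mulr_natl.
Qed.

End Comb.
Lemma final_real (R : realType) (p q N L K eps e : R) (D M : nat) :
 0 < p -> p <= 1 -> 0 < q -> q <= 1 -> 1 <= L -> 1 <= N -> K * L <= p*q*q*N ->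
 0 < eps -> 0 < e -> 30 <= eps * K -> 2 <= e * K -> 1 <= K ->
 D%:R * (p*q) <= 14 * L + p * q ->
 M%:R * p <= N^+2 + p ->
 (1 - p*q)^+D * N^+5 <= 1 ->
 D%:R <= eps * (q * N) /\ M%:R * ((1-p*q)^+D * N) <= e.
Proof.
move=> hp0 hp1 hq0 hq1 hL hN hK heps he hKe hKe2 hK1 hD hM hy.
have hpq0 : 0 < p * q := mulr_gt0 hp0 hq0.
have hpq1 : p * q <= 1 by apply: mulr_ile1 => //; apply: ltW.
have hX : p * q * q * N <= N.
  have hpqq : p*q*q <= 1 by apply: mulr_ile1 => //; [exact: ltW | exact: ltW].
  rewrite -[X in _ <= X]mul1r ler_wpM2r //; lra.
have hKL : K <= K * L by rewrite -[X in X <= _]mulr1 ler_wpM2l //; lra.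
split.
  have h1 : eps * (K * L) <= eps * (p * q * q * N) by rewrite ler_wpM2l //; lra.
  have h2 : 30 * L <= eps * K * L by rewrite ler_wpM2r //; lra.
  have h3 : D%:R * (p * q) <= eps * (q * N) * (p * q).
    have -> : eps * (q * N) * (p * q) = eps * (p * q * q * N) by ring.
    lra.
  by rewrite ler_pM2r in h3.
set y := (1 - p * q) ^+ D.
have hy0 : 0 <= y by apply: exprn_ge0; lra.
have hpN : 1 <= p * N.
  have : p * q * q * N <= p * N.
    have -> : p * q * q * N = (q * q) * (p * N) by ring.
    rewrite -[X in _ <= X]mul1r ler_wpM2r //; first by apply: mulr_ge0; lra.
    apply: mulr_ile1; lra.
  lra.
have hM0 : 0 <= M%:R :> R by apply: ler0n.
have hM1 : M%:R <= M%:R * (p * N) :> R by rewrite -[X in X <= _]mulr1 ler_wpM2l.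
have hM2 : M%:R <= N ^+ 3 + N.
  have : M%:R * (p * N) <= (N ^+ 2 + p) * N by rewrite mulrA ler_wpM2r //; lra.
  have -> : (N ^+ 2 + p) * N = N ^+ 3 + p * N by ring.
  have : p * N <= N by rewrite -[X in _ <= X]mul1r ler_wpM2r //; lra.
  lra.
have hN3 : N <= N ^+ 3.
  have h1 : 1 <= N ^+ 2 by apply: exprn_ege1.
  have -> : N ^+ 3 = N ^+ 2 * N by ring.
  rewrite -[X in X <= _]mul1r ler_wpM2r //; lra.
have hNK : K <= N by lra.
have hN0 : 0 < N by lra.
rewrite -(ler_pM2r hN0).
have : M%:R * (y * N) * N <= 2 * (y * N ^+ 5).
  have -> : M%:R * (y * N) * N = M%:R * (y * N ^+ 2) by ring.
  have hyN2 : 0 <= y * N ^+ 2 by apply: mulr_ge0 => //; apply: exprn_ge0; lra.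
  apply: le_trans (_ : (2 * N ^+ 3) * (y * N ^+ 2) <= _).
    rewrite ler_wpM2r //; lra.
  have -> : 2 * N ^+ 3 * (y * N ^+ 2) = 2 * (y * N ^+ 5) by ring.
  done.
have : e * K <= e * N by rewrite ler_wpM2l //; lra.
move: hy; rewrite -/y mulrC => hy.
lra.
Qed.

Lemma y_bound (R : realType) (p q N : R) (D : nat) :
  0 < p -> p <= 1 -> 0 < q -> q <= 1 -> 0 < N ->
  5 * ln N <= D%:R * (p * q) -> (1 - p * q) ^+ D * N ^+ 5 <= 1.
Proof.
move=> hp0 hp1 hq0 hq1 hN hD.
have hpq0 : 0 < p * q := mulr_gt0 hp0 hq0.
have hpq1 : p * q <= 1 by apply: mulr_ile1 => //; apply: ltW.
have h1 : (1 - p * q) ^+ D <= expR (- (p * q)) ^+ D.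
  apply: lerXn2r; rewrite ?nnegrE ?expR_ge0 //; first lra.
  have := expR_ge1Dx (- (p * q)). lra.
have h2 : expR (- (p * q)) ^+ D <= (N ^+ 5)^-1.
  rewrite -expRM_natr.
  have -> : (N ^+ 5)^-1 = expR (- (5%:R * ln N)).
    rewrite expRN expRM_natl lnK //.
  rewrite ler_expR. lra.
have hN5 : 0 < N ^+ 5 by apply: exprn_gt0.
apply: le_trans (_ : (N ^+ 5)^-1 * N ^+ 5 <= 1).
  rewrite ler_wpM2r //; [exact: ltW | exact: le_trans h1 h2].
by rewrite mulVf // gt_eqF.
Qed.

Lemma pointwise (R : realType) (P Q : R) (s : seq nat) (n : nat) (eps e K : R) :
  0 < P <= 1 -> 0 < Q <= 1 -> is_config n s -> 0 < eps -> 0 < e ->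
  1 <= K -> 30 <= eps * K -> 2 <= e * K ->
  K <= P * Q ^+ 2 * n%:R / ln (n%:R : R) ->
  (Num.Def.archi_bound (expR (1 : R)) < n)%N ->
  `|0 - (let D := `|Num.ceil (14 * ln (n%:R : R) / (P * Q))|%N in
     let M := `|Num.ceil ((n%:R : R) ^+ 2 / P)|%N in
     traj_prob P Q (D + M) s
       (fun tr => eps < (\max_(k <- iota D.+1 M) npiles (nth [::] tr k.-1))%:R
                        / (Q * n%:R)))| <= e.
Proof.
move=> /andP [hp0 hp1] /andP [hq0 hq1] [hsum _] heps he hK1 hKe hKe2 hKn hNn.
cbv zeta.
set D := `|Num.Def.ceil (14 * ln (n%:R : R) / (P * Q))|%N.
set M := `|Num.Def.ceil ((n%:R : R) ^+ 2 / P)|%N.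
have he1 : (0 : R) < expR 1 := expR_gt0 1.
have hN1 : expR 1 < (n%:R : R).
  apply: lt_trans (archi_boundP (ltW he1)) _. by rewrite ltr_nat.
set N := (n%:R : R) in hN1 hKn *.
have hN0 : 0 < N by apply: lt_trans he1 hN1.
have hNge1 : 1 <= N by have := expR_ge1Dx (1 : R); lra.
have hL : 1 <= ln N.
  have : ln (expR 1) <= ln N by rewrite ler_ln ?posrE //; exact: ltW.
  by rewrite expRK.
set L := ln N in hL hKn *.
have hL0 : 0 < L by lra.
have hKL : K * L <= P * Q * Q * N.
  by rewrite ler_pdivlMr // expr2 !mulrA in hKn.
have hPQ : 0 < P * Q := mulr_gt0 hp0 hq0.
set x := 14 * L / (P * Q).
have hx0 : 0 <= x by apply: divr_ge0; [lra | exact: ltW].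
have hc0 : 0 <= Num.ceil x by rewrite ceil_ge0; lra.
have hDx : D%:R = (Num.ceil x)%:~R :> R by rewrite /D natr_absz ger0_norm.
have hxPQ : x * (P * Q) = 14 * L by rewrite /x divfK // gt_eqF.
have hD1 : 14 * L <= D%:R * (P * Q).
  rewrite -hxPQ ler_wpM2r //; [exact: ltW | rewrite hDx; exact: ceil_ge].
have hD2 : D%:R * (P * Q) <= 14 * L + P * Q.
  have h := ceilB1_lt x. rewrite intrD /= in h.
  have hDx1 : D%:R <= x + 1 by rewrite hDx; lra.
  rewrite -hxPQ -[X in _ <= _ + X]mul1r -mulrDl ler_wpM2r //; exact: ltW.
set x' := N ^+ 2 / P.
have hx'0 : 0 <= x' by apply: divr_ge0; [apply: exprn_ge0; lra | exact: ltW].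
have hc0' : 0 <= Num.ceil x' by rewrite ceil_ge0; lra.
have hMx : M%:R = (Num.ceil x')%:~R :> R by rewrite /M natr_absz ger0_norm.
have hM : M%:R * P <= N ^+ 2 + P.
  have h := ceilB1_lt x'. rewrite intrD /= in h.
  have hMx1 : M%:R <= x' + 1 by rewrite hMx; lra.
  have -> : N ^+ 2 = x' * P by rewrite /x' divfK // gt_eqF.
  rewrite -[X in _ <= _ + X]mul1r -mulrDl ler_wpM2r //; exact: ltW.
have hy := @y_bound R P Q N D hp0 hp1 hq0 hq1 hN0 (_ : 5 * L <= D%:R * (P * Q)).
have [hDa hb] := @final_real R P Q N L K eps e D M hp0 hp1 hq0 hq1 hL hNge1 hKL heps he hKe hKe2 hK1 hD2 hM (hy ltac:(lra)).
have hQN : 0 < Q * N := mulr_gt0 hq0 hN0.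
have Hev : forall tr, (eps < (\max_(k <- iota D.+1 M) npiles (nth [::] tr k.-1))%:R / (Q * N)) ->
    has (fun k => (D < npiles (nth [::] tr k.-1))%N) (iota D.+1 M).
  move=> tr H; apply/negPn/negP => Hn. move: H; apply/negP; rewrite -leNgt.
  rewrite ler_pdivrMr //. apply: le_trans hDa. rewrite ler_nat.
  apply/bigmax_leqP_seq => k Hk _. have := hasPn Hn k Hk. by rewrite -leqNgt.
have h1 := @traj_mono R P Q hp0 hp1 (D + M) s _ _ Hev.
have h2 := @bound_all R P Q hp0 hp1 hq0 hq1 n s D M hsum.
have h0 := @traj_mono R P Q hp0 hp1 (D + M) s (fun _ => false)
   (fun tr => eps < (\max_(k <- iota D.+1 M) npiles (nth [::] tr k.-1))%:R / (Q * N)) ltac:(by move=> tr).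
rewrite traj_const /= in h0.
rewrite sub0r normrN ger0_norm //.
apply: le_trans h1 _. apply: le_trans h2 _. rewrite -/N. exact: hb.
Qed.

Theorem lemma5 (R : realType) (p q : nat -> R) (alpha0 : nat -> seq nat) :
  (forall n, 0 < p n <= 1) ->
  (forall n, 0 < q n <= 1) ->
  ((fun n => p n * q n ^+ 2 * n%:R / ln (n%:R : R)) @ \oo --> +oo) ->
  (forall n, is_config n (alpha0 n)) ->
  forall eps : R, 0 < eps ->
  (fun n =>
     let D := `|Num.ceil (14 * ln (n%:R : R) / (p n * q n))|%N in
     let M := `|Num.ceil ((n%:R : R) ^+ 2 / p n)|%N in
     traj_prob (p n) (q n) (D + M) (alpha0 n)
       (fun tr => eps < (\max_(k <- iota D.+1 M) npiles (nth [::] tr k.-1))%:R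
                        / (q n * n%:R)))
    @ \oo --> 0.
Proof.
move=> hp hq hf hconf eps heps.
apply/cvgrPdist_le => e he.
set K : R := 30 / eps + 2 / e + 1.
have HK := @cvgry_ge _ _ _ eventually_filter _ hf K.
have HN := nbhs_infty_gt (Num.Def.archi_bound (expR (1 : R))).
have hK1 : 1 <= K.
  rewrite /K lerDr. apply: addr_ge0; apply: divr_ge0 => //; exact: ltW.
have a1 : 0 <= 30 / eps by apply: divr_ge0 => //; exact: ltW.
have a2 : 0 <= 2 / e by apply: divr_ge0 => //; exact: ltW.
have hKe : 30 <= eps * K.
  have h30 : eps * (30 / eps) = 30 by rewrite mulrCA divff ?gt_eqF // mulr1.
  have b : 0 <= eps * (2 / e) by apply: mulr_ge0 => //; exact: ltW.
  rewrite /K !mulrDr h30 mulr1. lra.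
have hKe2 : 2 <= e * K.
  have h2 : e * (2 / e) = 2 by rewrite mulrCA divff ?gt_eqF // mulr1.
  have b : 0 <= e * (30 / eps) by apply: mulr_ge0 => //; exact: ltW.
  rewrite /K !mulrDr h2 mulr1. lra.
near=> n.
apply: (@pointwise R (p n) (q n) (alpha0 n) n eps e K (hp n) (hq n) (hconf n) heps he hK1 hKe hKe2).
- near: n. exact: HK.
- near: n. exact: HN.
Unshelve. all: by end_near.
Qed.
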